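(* Let $\Gamma=\langle V,(w_u)_{u\in V},\alpha,\beta\rangle$ be a celebrity game with $\beta>1$, $n=|V|$, $W=\sum_{u\in V}w_u$ and $w_{\max}=\max_u w_u$. The edgeless graph $I_n$ on $V$ is the unique Nash equilibrium graph of $\Gamma$ if and only if $\alpha\ge w_{\max}$ and there is more than one vertex $u\in V$ such that $\alpha>W-w_u$.
   Context: A celebrity game $\Gamma=\langle V,(w_u)_{u\in V},\alpha,\beta\rangle$ consists of a set of players $V=\{1,\dots,n\}$, celebrity weights $w_u>0$, a link cost $\alpha>0$ and a critical distance $\beta$ with $1\le\beta\le n-1$. A strategy of player $u$ is a set $S_u\subseteq V\setminus\{u\}$; a strategy profile is $S=(S_1,\dots,S_n)$; its outcome graph $G[S]$ is the undirected graph on $V$ with edge set $\{\{u,v\}: u\in S_v\text{ or }v\in S_u\}$. With $d_G$ the graph distance (infinite between different connected components), the cost of player $u$ is $c_u(S)=\alpha|S_u|+\sum_{v:\,d_{G[S]}(u,v)>\beta}w_v$. $S$ is a Nash equilibrium if no player can strictly decrease its cost by changing only its own strategy; a graph $G$ is a Nash equilibrium graph of $\Gamma$ if $G=G[S]$ for some Nash equilibrium $S$. *)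

(* Defs.v *)
From HB Require Import structures.
From mathcomp Require Import all_boot all_order all_algebra.
Set Implicit Arguments. Unset Strict Implicit. Unset Printing Implicit Defensive.
Import Order.TTheory GRing.Theory Num.Theory.
Local Open Scope ring_scope.

(* A strategy profile: S u is the set of players u buys links to. *)
Definition profile (n : nat) := 'I_n -> {set 'I_n}.

Definition valid_profile n (S : profile n) : Prop := forall u, u \notin S u.

Definition outcome n (S : profile n) : rel 'I_n :=
  fun u v => (u \in S v) || (v \in S u).

(* within G k u v  <=>  d_G(u,v) <= k  (graph distance; infinite across components) *)
Fixpoint within n (G : rel 'I_n) (k : nat) (u v : 'I_n) : bool :=
  match k with
  | 0 => u == v
  | k.+1 => within G k u v || [exists x, within G k u x && G x v]
  end.

Definition cost (R : realFieldType) n (w : 'I_n -> R) (alpha : R) (beta : nat)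
  (S : profile n) (u : 'I_n) : R :=
  alpha * (#|S u|)%:R + \sum_(v : 'I_n | ~~ within (outcome S) beta u v) w v.

Definition deviate n (S : profile n) (u : 'I_n) (T : {set 'I_n}) : profile n :=
  fun v => if v == u then T else S v.

Definition nash (R : realFieldType) n (w : 'I_n -> R) (alpha : R) (beta : nat)
  (S : profile n) : Prop :=
  valid_profile S /\
  forall (u : 'I_n) (T : {set 'I_n}), u \notin T ->
    cost w alpha beta S u <= cost w alpha beta (deviate S u T) u.

Definition nash_graph (R : realFieldType) n (w : 'I_n -> R) (alpha : R) (beta : nat)
  (G : rel 'I_n) : Prop :=
  exists S : profile n, nash w alpha beta S /\ forall u v, G u v = outcome S u v.

Definition edgeless n : rel 'I_n := fun _ _ => false.

Definition unique_nash_graph_edgeless (R : realFieldType) n (w : 'I_n -> R)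
  (alpha : R) (beta : nat) : Prop :=
  nash_graph w alpha beta (@edgeless n) /\
  forall G : rel 'I_n, nash_graph w alpha beta G -> forall u v, G u v = edgeless u v.

(* Main.v *)
Require Import Defs.
From HB Require Import structures.
From mathcomp Require Import all_boot all_order all_algebra.
Import Order.TTheory GRing.Theory Num.Theory.
Local Open Scope ring_scope.

Lemma within_refl n (G : rel 'I_n) k u : within G k u u.
Proof. elim: k => [|k IH] /=; [exact: eqxx | by rewrite IH]. Qed.

Lemma within_inv n (G : rel 'I_n) (P : 'I_n -> Prop) :
  (forall x y, G x y -> P x -> P y) ->
  forall k u v, P u -> within G k u v -> P v.
Proof.
move=> HG; elim=> [|k IH] u v Pu /=; first by move/eqP <-.
case/orP; first exact: IH.
case/existsP=> x /andP [hx hxv]; apply: (HG x) => //; exact: IH hx.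
Qed.

Lemma within_iff n (G : rel 'I_n) (P : 'I_n -> Prop) :
  (forall x y, G x y -> (P x <-> P y)) ->
  forall k u v, within G k u v -> (P u <-> P v).
Proof.
move=> HG; elim=> [|k IH] u v /=; first by move/eqP <-.
case/orP; first exact: IH.
case/existsP=> x /andP [hx hxv]; exact: iff_trans (IH _ _ hx) (HG _ _ hxv).
Qed.

Lemma within_mono n (G : rel 'I_n) k k' u v :
  (k <= k')%N -> within G k u v -> within G k' u v.
Proof.
elim: k' => [|k' IH]; first by rewrite leqn0 => /eqP ->.
rewrite leq_eqVlt => /orP [/eqP -> //| hk] h /=.
by rewrite (IH hk h).
Qed.

Lemma within_edge n (G : rel 'I_n) k u v : (1 <= k)%N -> G u v -> within G k u v.
Proof.
move=> hk e; apply: (@within_mono _ _ 1 _ _ _ hk) => /=.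
apply/orP; right; apply/existsP; exists u; by rewrite eqxx e.
Qed.

Lemma within_edge2 n (G : rel 'I_n) k u x v : (2 <= k)%N -> G u x -> G x v ->
  within G k u v.
Proof.
move=> hk e1 e2; apply: (@within_mono _ _ 2 _ _ _ hk) => /=.
apply/orP; right; apply/existsP; exists x; rewrite e2 andbT.
apply/orP; right; apply/existsP; exists u; by rewrite eqxx e1.
Qed.

Section Sums.
Context {R : realFieldType} {n : nat} {w : 'I_n -> R}.
Hypothesis hw : forall u, 0 < w u.

Lemma le_sum_sub (P Q : pred 'I_n) :
  (forall v, P v -> Q v) -> \sum_(v | P v) w v <= \sum_(v | Q v) w v.
Proof.
move=> hPQ; rewrite [X in X <= _]big_mkcond [X in _ <= X]big_mkcond /=.
apply: ler_sum => i _; case: (boolP (P i)) => hp; first by rewrite hPQ.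
by case: (Q i) => //; exact: ltW.
Qed.

Lemma sum_ge0' (P : pred 'I_n) : 0 <= \sum_(v | P v) w v.
Proof. by apply: sumr_ge0 => i _; exact: ltW. Qed.

Lemma le_sum_one (P : pred 'I_n) a : P a -> w a <= \sum_(v | P v) w v.
Proof.
move=> Pa; rewrite (bigD1 a) //=; rewrite lerDl; exact: sum_ge0'.
Qed.

Lemma sum_neq x : \sum_(v | v != x) w v = \sum_(v < n) w v - w x.
Proof. by rewrite [X in _ = X - _](bigD1 x) //= addrC addrK. Qed.
End Sums.

From mathcomp Require Import lra.

Section Game.
Variables (R : realFieldType) (n : nat) (w : 'I_n -> R) (alpha : R) (beta : nat).
Hypothesis hw : forall u, 0 < w u.
Hypothesis halpha : 0 < alpha.
Hypothesis hbeta : (1 < beta)%N.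

Local Notation W := (\sum_(v < n) w v).
Local Notation cst := (cost w alpha beta).

Lemma cost_dev_empty (S : profile n) x : cst (deviate S x set0) x <= W - w x.
Proof.
rewrite /cost /deviate /= eqxx cards0 mulr0 add0r -sum_neq.
apply: le_sum_sub => // v; apply: contra => /eqP ->; exact: within_refl.
Qed.

Lemma cost_ge0 (S : profile n) x : alpha * (#|S x|)%:R <= cst S x.
Proof. by rewrite /cost lerDl; apply: sum_ge0'. Qed.

Lemma cost_ge (S : profile n) x a : ~~ within (outcome S) beta x a ->
  alpha * (#|S x|)%:R + w a <= cst S x.
Proof. by move=> h; rewrite /cost lerD2l; apply: le_sum_one. Qed.

Lemma edgeless_nash : \big[Num.max/0]_(u < n) w u <= alpha ->
  nash w alpha beta (fun _ => set0).
Proof.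
move=> hmax; split; first by move=> u; rewrite in_set0.
move=> u T huT.
have wle : forall v, w v <= alpha.
  move=> v; apply: le_trans hmax; exact: (le_bigmax 0 w v).
rewrite /cost cards0 mulr0 add0r.
apply: (@le_trans _ _ (\sum_(v | v != u) w v)).
  apply: le_sum_sub => // v; apply: contra => /eqP ->; exact: within_refl.
rewrite (bigID (mem T)) /=; apply: lerD.
  apply: (@le_trans _ _ (\sum_(v in T) w v)).
    by apply: le_sum_sub => // v /andP [].
  rewrite /deviate eqxx mulr_natr -sumr_const. apply: ler_sum => v _; exact: wle.

apply: le_sum_sub => // v /andP [hvu hvT]; apply/negP => hwin.
have HG : forall x y, outcome (deviate (fun=> set0) u T) x y ->
    (x == u) || (x \in T) -> (y == u) || (y \in T).
  move=> x y e _; move: e; rewrite /outcome /deviate.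
  case: (y == u) => //=; case: (x == u) => //=; rewrite ?in_set0 //=.
have := @within_inv n _ (fun x => (x == u) || (x \in T)) HG beta u v.
rewrite eqxx => /(_ isT hwin); by rewrite (negbTE hvu) (negbTE hvT).
Qed.

Definition fsel (S : profile n) (v : 'I_n) : 'I_n :=
  odflt v [pick y in S v].

Lemma iter_fix (f : 'I_n -> 'I_n) a k : f a = a -> iter k f a = a.
Proof. by move=> fa; elim: k => //= k ->. Qed.

Lemma reach_edge (f : 'I_n -> 'I_n) a x y : f a = a -> f x = y ->
  ((exists m, iter m f x = a) <-> (exists m, iter m f y = a)).
Proof.
move=> fa fxy; split.
  case=> [[|m]].
    by move=> /= hx; exists 0%N => /=; rewrite -fxy hx fa.
  by rewrite iterSr fxy => h; exists m.
by case=> m h; exists m.+1; rewrite iterSr fxy.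
Qed.

Lemma unique_edgeless a1 a2 (S : profile n) :
  a1 != a2 -> W - w a1 < alpha -> W - w a2 < alpha ->
  nash w alpha beta S -> forall u v, outcome S u v = false.
Proof.
move=> ha12 h1 h2 [hval hN].
have hD : forall x, cst S x <= W - w x.
  move=> x; apply: le_trans (hN x set0 _) _; first by rewrite in_set0.
  exact: cost_dev_empty.
have hW12 : w a1 + w a2 <= W.
  rewrite (bigD1 a1) //= (bigD1 a2) /=; last by rewrite eq_sym.
  by rewrite addrA lerDl; apply: sum_ge0'.
have hA : forall a, W - w a < alpha -> S a = set0.
  move=> a ha; apply/eqP; rewrite -cards_eq0 -leqn0 leqNgt; apply/negP => hpos.
  have := cost_ge0 S a; have := hD a.
  have : alpha <= alpha * (#|S a|)%:R by apply: ler_peMr; [exact: ltW | rewrite ler1n].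
  move=> *; lra.
have hle1 : forall x, (#|S x| <= 1)%N.
  move=> x; rewrite leqNgt; apply/negP => h.
  have : alpha * 2 <= alpha * (#|S x|)%:R.
    by rewrite ler_pM2l // ler_nat.
  have := cost_ge0 S x; have := hD x; have := hw x.
  move=> *; lra.
have hreach : forall x a, S x != set0 -> W - w a < alpha ->
    within (outcome S) beta x a.
  move=> x a hne ha; apply/negPn/negP => hnw.
  have := @cost_ge S x a hnw; have := hD x; have := hw x.
  have : alpha <= alpha * (#|S x|)%:R by apply: ler_peMr; [exact: ltW | rewrite ler1n lt0n cards_eq0].
  move=> *; lra.
pose f := fsel S.
have hf : forall u v, u \in S v -> f v = u.
  move=> u v hu; rewrite /f /fsel; case: pickP => [y hy|h] /=.
    by apply: (card_le1_eqP (hle1 v)).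
  by have := h u; rewrite hu.
have hfa : forall a, S a = set0 -> f a = a.
  move=> a ha; rewrite /f /fsel; case: pickP => [y|] //=; by rewrite ha in_set0.
have hedge : forall a, f a = a -> forall x y, outcome S x y ->
    ((exists m, iter m f x = a) <-> (exists m, iter m f y = a)).
  move=> a fa x y; rewrite /outcome => /orP [] h.
    by apply: iff_sym; apply: reach_edge => //; apply: hf.
  by apply: reach_edge => //; apply: hf.
have contra_buyer : forall x, S x != set0 -> False.
  move=> x hne.
  have r1 := @within_iff n (outcome S) (fun z => exists m, iter m f z = a1) (hedge _ (hfa _ (hA _ h1))) beta x a1 (hreach _ _ hne h1).
  have r2 := @within_iff n (outcome S) (fun z => exists m, iter m f z = a2) (hedge _ (hfa _ (hA _ h2))) beta x a2 (hreach _ _ hne h2).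
  have [m1 hm1] : exists m, iter m f x = a1 by apply/r1; exists 0%N.
  have [m2 hm2] : exists m, iter m f x = a2 by apply/r2; exists 0%N.
  have fa1 := hfa _ (hA _ h1); have fa2 := hfa _ (hA _ h2).
  case: (leqP m1 m2) => hm.
    move: hm2; rewrite -(subnK hm) iterD hm1 iter_fix // => e.
    by rewrite e eqxx in ha12.
  move: hm1; rewrite -(subnK (ltnW hm)) iterD hm2 iter_fix // => e.
  by rewrite e eqxx in ha12.
move=> u v; apply/negP; rewrite /outcome => /orP [] h.
  by apply: (contra_buyer v); apply/set0Pn; exists u.
by apply: (contra_buyer u); apply/set0Pn; exists v.
Qed.

End Game.
Lemma other_vertex n (v : 'I_n) : (1 < n)%N -> exists u : 'I_n, u != v.
Proof.
move=> h; have h0 : (0 < n)%N by apply: ltnW.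
case: (eqVneq v (Ordinal h0)) => [->|hv].
  by exists (Ordinal h); apply/eqP => /(congr1 val).
by exists (Ordinal h0); rewrite eq_sym.
Qed.

Theorem corollary1 (R : realFieldType) (n : nat) (w : 'I_n -> R) (alpha : R)
  (beta : nat)
  (hw : forall u, 0 < w u) (halpha : 0 < alpha)
  (hbeta1 : (1 <= beta)%N) (hbetan : (beta <= n - 1)%N)
  (hbeta : (1 < beta)%N) :
  unique_nash_graph_edgeless w alpha beta <->
  (\big[Num.max/0]_(u < n) w u <= alpha /\
   (1 < #|[set u : 'I_n | (\sum_(v < n) w v - w u < alpha)%R]|)%N).
Proof.
have hn : (1 < n)%N.
  exact: leq_trans (leq_trans hbeta hbetan) (leq_subr 1 n).
split.
- move=> [[S0 [hS0 hG0]] huniq].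
  have hS0e : forall u v, (v \in S0 u) = false.
    move=> u v; have := hG0 v u; rewrite /outcome /edgeless => e.
    by apply/negP => h; move: e; rewrite h.
  split.
    apply/bigmax_leP; split; first exact: ltW.
    move=> v _; have [u huv] := other_vertex _ v hn.
    have h := hS0.2 u [set v]; rewrite in_set1 huv in h.
    have h1 : \sum_(z | z != u) w z <= cost w alpha beta S0 u.
      rewrite /cost.
      have -> : #|S0 u| = 0%N.
        by apply/eqP; rewrite cards_eq0; apply/eqP/setP => z; rewrite hS0e in_set0.
      rewrite mulr0 add0r; apply: le_sum_sub => // z hz; apply/negP => hwin.
      have HG : forall x y, outcome S0 x y -> x == u -> y == u.
        by move=> x y; rewrite /outcome !hS0e.
      have := @within_inv n (outcome S0) (fun x => x == u) HG beta u z (eqxx u) hwin.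
      by rewrite (negbTE hz).
    have h2 : cost w alpha beta (deviate S0 u [set v]) u <=
        alpha + \sum_(z | (z != u) && (z != v)) w z.
      rewrite /cost /deviate eqxx cards1 mulr1 lerD2l.
      apply: le_sum_sub => // z; apply: contraR; rewrite negb_and !negbK.
      case/orP => /eqP ->; first exact: within_refl.
      apply: within_edge => //; rewrite /outcome eqxx in_set1 eqxx orbT //.
    have h3 : \sum_(z | z != u) w z = w v + \sum_(z | (z != u) && (z != v)) w z.
      by rewrite (bigD1 v) //= eq_sym.
    have := le_trans h1 (le_trans (h isT) h2); rewrite h3; move=> *; lra.
  rewrite ltnNge; apply/negP => hle.
  set A := [set u : 'I_n | \sum_(v < n) w v - w u < alpha] in hle.
  have h0 : (0 < n)%N by apply: ltnW.
  pose c := odflt (Ordinal h0) [pick a in A].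
  have hc : forall u, u != c -> alpha <= \sum_(v < n) w v - w u.
    rewrite /c; case: pickP => [a ha|h] /= u hu; rewrite leNgt.
      apply/negP => huA; have : u \in A by rewrite inE.
      move=> huA'; move/negP: hu; apply; apply/eqP.
      by have H := card_le1_eqP hle; exact: H.
    by have := h u; rewrite inE => ->.
  pose S := fun v : 'I_n => if v == c then set0 else [set c].
  have hSc : forall x, x != c -> S x = [set c] by move=> x hx; rewrite /S (negbTE hx).
  have hS_c : S c = set0 by rewrite /S eqxx.
  have hedge : forall x, x != c -> outcome S x c && outcome S c x.
    by move=> x hx; rewrite /outcome (hSc x hx) in_set1 eqxx orbT.
  have hall : forall u z, within (outcome S) beta u z.
    move=> u z.
    case: (eqVneq u c) => [->|huc]; case: (eqVneq z c) => [->|hzc].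
    - exact: within_refl.
    - by apply: within_edge => //; case/andP: (hedge z hzc).
    - by apply: within_edge => //; case/andP: (hedge u huc).
    - apply: (@within_edge2 _ _ _ u c z) => //.
        by case/andP: (hedge u huc).
      by case/andP: (hedge z hzc).
  have hcost0 : forall u, \sum_(v | ~~ within (outcome S) beta u v) w v = 0.
    by move=> u; apply: big1 => v; rewrite hall.
  have hstar : nash w alpha beta S.
    split.
      move=> v; case: (eqVneq v c) => [->|hv]; first by rewrite hS_c in_set0.
      by rewrite hSc // in_set1.
    move=> u T huT; rewrite {1}/cost hcost0 addr0.
    have hdev0 : 0 <= alpha * (#|T|)%:R.
      by apply: mulr_ge0; [exact: ltW | exact: ler0n].
    have hdev : alpha * (#|T|)%:R <= cost w alpha beta (deviate S u T) u.
      by rewrite /cost /deviate eqxx lerDl; apply: sum_ge0'.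
    case: (eqVneq u c) => [euc|huc].
      rewrite {1}euc hS_c cards0 mulr0; exact: le_trans hdev0 hdev.
    rewrite hSc // cards1 mulr1.
    case: (eqVneq T set0) => [hT|hT].
      apply: le_trans (hc u huc) _; rewrite -sum_neq.
      rewrite /cost hT {1}/deviate eqxx cards0 mulr0 add0r.
      apply: le_sum_sub => // z hz; apply/negP => hwin.
      have HG : forall x y, outcome (deviate S u set0) x y -> x == u -> y == u.
        move=> x y; rewrite /outcome /deviate => e /eqP hx; subst x; move: e.
        rewrite eqxx in_set0 orbF; case: (eqVneq y u) => // hyu.
        case: (eqVneq y c) => [->|hyc]; first by rewrite hS_c in_set0.
        by rewrite hSc // in_set1 (negbTE huc).
      have := @within_inv n _ (fun x => x == u) HG beta u z (eqxx u) hwin.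
      by rewrite (negbTE hz).
    apply: le_trans hdev; apply: ler_peMr; first exact: ltW.
    by rewrite ler1n lt0n cards_eq0.
  have [u huc] := other_vertex _ c hn.
  have := huniq (outcome S) (ex_intro _ S (conj hstar (fun _ _ => erefl))) u c.
  by case/andP: (hedge u huc) => ->.
- move=> [hmax hcard].
  split.
    exists (fun _ => set0); split; first exact: edgeless_nash.
    by move=> u v; rewrite /outcome !in_set0.
  move=> G [S [hS hG]] u v; rewrite hG /edgeless.
  have [a1 [a2 [ha1 ha2 ha12]]] := card_gt1P hcard.
  rewrite !inE in ha1 ha2.
  have := @unique_edgeless R n w alpha beta hw halpha a1 a2 S ha12; move=> /(_ ha1 ha2 hS); exact.
Qed.
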